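(* Let $\Gamma$ be a connected signed graph on $N$ vertices and $t^*\in\mathbb{R}$. The dimension of the kernel of $\mathcal{L}(\Gamma(t^* ))$ restricted to $\mathbf{1}^\perp=\{v\in\mathbb{R}^N:\sum_iv_i=0\}$ equals the multiplicity of $t^*$ as a root of the polynomial $t\mapsto \mathcal{M}(\Gamma(t))$.
   Context: A signed graph $\Gamma$ is a finite simple undirected graph with vertex set $\{1,\dots,N\}$ in which every edge $\{i,j\}$ carries a nonzero real weight $\gamma_{ij}$, which may be of either sign. For real $t$, $\Gamma(t)$ is the weighted graph with the same edges and weights $\gamma_{ij}(t)=\gamma_{ij}$ if $\gamma_{ij}>0$ and $\gamma_{ij}(t)=t\gamma_{ij}$ if $\gamma_{ij}<0$. For a weighted graph $H$ with weights $w_{ij}$, its Laplacian $\mathcal{L}(H)$ has off-diagonal entries $w_{ij}$ (zero for non-edges) and diagonal entries $-\sum_{k\neq i}w_{ik}$, and $\mathcal{M}(H)=\sum_T\prod_{e\in E(T)}w(e)$ summed over spanning trees $T$ of $H$; equivalently $\mathcal{M}(H)=\frac{(-1)^{n-1}}{n}\prod_{i=2}^n\lambda_i$ where $n=|V(H)|$ and $\lambda_1=0,\lambda_2,\dots,\lambda_n$ are the eigenvalues of $\mathcal{L}(H)$. *)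

(* Defs.v *)
From HB Require Import structures.
From mathcomp Require Import all_boot all_order all_algebra.
Set Implicit Arguments. Unset Strict Implicit. Unset Printing Implicit Defensive.
Import Order.TTheory GRing.Theory Num.Theory.
Local Open Scope ring_scope.

(* A signed graph on vertex set 'I_N is given by a symmetric weight matrix
   gamma with zero diagonal; {i,j} is an edge iff gamma i j != 0, and then
   gamma i j is its (nonzero) weight. *)
Definition signed_graph (R : numDomainType) (N : nat) (gamma : 'M[R]_N) : Prop :=
  (forall i j, gamma i j = gamma j i) /\ (forall i, gamma i i = 0).

Definition sg_adj (R : numDomainType) (N : nat) (gamma : 'M[R]_N) : rel 'I_N :=
  fun i j => gamma i j != 0.

Definition sg_connected (R : numDomainType) (N : nat) (gamma : 'M[R]_N) : Prop :=
  forall i j : 'I_N, connect (sg_adj gamma) i j.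

Definition gamma_t (R : numDomainType) (N : nat) (gamma : 'M[R]_N) (t : R)
  : 'I_N -> 'I_N -> R :=
  fun i j => if 0 < gamma i j then gamma i j else t * gamma i j.

Definition laplacian (R : pzRingType) (N : nat) (w : 'I_N -> 'I_N -> R) : 'M[R]_N :=
  \matrix_(i, j) (if i == j then - \sum_(k < N | k != i) w i k else w i j).

Definition spanning_tree (N : nat) (E : rel 'I_N) (T : {set 'I_N * 'I_N}) : bool :=
  [forall e in T, (e.1 < e.2)%N && E e.1 e.2]
  && [forall i, forall j,
        connect (fun x y => ((x, y) \in T) || ((y, x) \in T)) i j]
  && (#|T| == N.-1)%N.

Definition tree_sum (S : comNzRingType) (N : nat) (E : rel 'I_N)
  (w : 'I_N -> 'I_N -> S) : S :=
  \sum_(T : {set 'I_N * 'I_N} | spanning_tree E T) \prod_(e in T) w e.1 e.2.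

Definition M_Gamma (R : realFieldType) (N : nat) (gamma : 'M[R]_N) (t : R) : R :=
  tree_sum (sg_adj gamma) (gamma_t gamma t).

Definition M_Gamma_poly (R : realFieldType) (N : nat) (gamma : 'M[R]_N) : {poly R} :=
  tree_sum (sg_adj gamma)
    (fun i j => if 0 < gamma i j then (gamma i j)%:P else gamma i j *: 'X).

Lemma M_Gamma_polyE (R : realFieldType) (N : nat) (gamma : 'M[R]_N) (t : R) :
  (M_Gamma_poly gamma).[t] = M_Gamma gamma t.
Proof.
rewrite /M_Gamma_poly /M_Gamma /tree_sum horner_sum; apply: eq_bigr => T _.
rewrite horner_prod; apply: eq_bigr => e _; rewrite /gamma_t.
by case: ifP => _; rewrite ?hornerC // hornerZ hornerX mulrC.
Qed.

(* dimension of ker L restricted to 1^perp = {v | sum_i v_i = 0}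
   (vectors represented as rows; L v = 0 iff v^T L^T = 0) *)
Definition ker_dim_on_ones_perp (R : fieldType) (N : nat) (L : 'M[R]_N) : nat :=
  \rank (kermx L^T :&: kermx (const_mx 1 : 'M[R]_(N, 1)))%MS.

(* Main.v *)
Require Import Defs.
From HB Require Import structures.
From mathcomp Require Import all_boot all_order all_algebra all_fingroup.
From mathcomp Require Import ring.
Set Implicit Arguments. Unset Strict Implicit. Unset Printing Implicit Defensive.
Import Order.TTheory GRing.Theory Num.Theory.
Local Open Scope ring_scope.


Section Arbo.
Variable n : nat.
Implicit Types (f g : 'I_n -> 'I_n.+1).

Definition par f (x : 'I_n.+1) : 'I_n.+1 :=
  if unlift ord0 x is Some i then f i else ord0.
Definition acyc f := [forall x, fconnect (par f) x ord0].

Lemma par0 f : par f ord0 = ord0.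
Proof. by rewrite /par unlift_none. Qed.
Lemma parL f i : par f (lift ord0 i) = f i.
Proof. by rewrite /par liftK. Qed.

Lemma acyc_never f (Q : 'I_n.+1 -> Prop) : acyc f ->
  (forall z, Q z -> z != ord0 /\ Q (par f z)) -> forall z, ~ Q z.
Proof.
move=> /forallP ac HQ z Qz; have := iter_findex (ac z).
set m := findex _ _ _.
have: Q (iter m (par f) z) by elim: m => [|m IH] //=; case: (HQ _ IH).
by move=> Qm Em; rewrite Em in Qm; case: (HQ _ Qm) => /eqP.
Qed.

Lemma fconnect_par f x : x != ord0 ->
  fconnect (par f) x ord0 = fconnect (par f) (par f x) ord0.
Proof.
move=> nx; apply/idP/idP => [H|H]; last exact: connect_trans (fconnect1 _ x) H.
have := iter_findex H; case: (findex _ _ _) => [/= E|m].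
  by rewrite E eqxx in nx.
by rewrite iterSr => <-; apply: fconnect_iter.
Qed.

Lemma acyc_neq f i : acyc f -> f i != lift ord0 i.
Proof.
move=> ac; apply/negP => /eqP E.
apply: (acyc_never (Q := fun z => z = lift ord0 i) ac) (erefl _).
by move=> z ->; split; [rewrite eq_sym neq_lift | rewrite parL E].
Qed.

Lemma acyc_2cyc f i : acyc f -> par f (f i) != lift ord0 i.
Proof.
move=> ac; apply/negP => /eqP E.
have fi0 : f i != ord0.
  by apply/negP => /eqP fi0; move: E; rewrite fi0 par0 => /eqP; rewrite (negbTE (neq_lift _ _)).
apply: (acyc_never (Q := fun z => z = lift ord0 i \/ z = f i) ac) (or_introl erefl).
move=> z [->|->]; split; rewrite ?parL ?E; auto.
Qed.


Lemma sum_delta (S : nzRingType) m (a : 'I_m) (g : 'I_m -> S) :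
  \sum_j (a == j)%:R * g j = g a.
Proof.
rewrite (bigD1 a) //= eqxx mul1r big1 ?addr0 // => j /negbTE.
by rewrite eq_sym => ->; rewrite mul0r.
Qed.

Section Det.
Variable S : comNzRingType.

Definition Emx f : 'M[S]_n :=
  \matrix_(i, j) ((f i == lift ord0 j)%:R - (i == j)%:R).

Lemma detE_acyc f : acyc f -> \det (Emx f) = (-1) ^+ n.
Proof.
move=> ac; rewrite /determinant (bigD1 (1%g : 'S_n)) //= [X in _ + X]big1 ?addr0; last first.
  move=> s s1.
  have [/existsP [i /andP [si fi]]|H] :=
    boolP [exists i, (s i != i) && (f i != lift ord0 (s i))].
    rewrite (bigD1 i) //= mxE (negbTE fi) eq_sym (negbTE si) subrr.
    by rewrite mul0r mulr0.
  have [i0 si0] : exists i, s i != i.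
    apply/existsP; apply: contraNT s1 => /existsPn H1.
    by apply/eqP/permP => x; rewrite perm1; apply/eqP; move: (H1 x); rewrite negbK.
  exfalso.
  apply: (acyc_never (Q := fun z => exists j, z = lift ord0 j /\ s j != j) ac)
     (ex_intro _ i0 (conj erefl si0)).
  move=> z [j [-> sj]]; split; first by rewrite eq_sym neq_lift.
  exists (s j); split.
    rewrite parL; move/existsPn: H => /(_ j); rewrite sj /= negbK.
    by move/eqP.
  by apply: contra sj => /eqP /perm_inj ->.
rewrite odd_perm1 /= mul1r (eq_bigr (fun _ => -1)).
  by rewrite prodr_const card_ord.
move=> i _; rewrite mxE perm1 eqxx (negbTE (acyc_neq _ ac)) /=.
by rewrite sub0r.
Qed.

Lemma detE_cyc f : ~~ acyc f -> \det (Emx f) = 0.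
Proof.
move=> /forallPn [x nx].
pose v (y : 'I_n.+1) : S := (~~ fconnect (par f) y ord0)%:R.
have v0 : v ord0 = 0 by rewrite /v connect0.
have [j0 xj0|x0] := unliftP ord0 x; last by rewrite x0 connect0 in nx.
pose c : 'cV[S]_n := \col_j v (lift ord0 j).
have Ec : Emx f *m c = 0.
  apply/matrixP => i k; rewrite !mxE.
  under eq_bigr => j _ do rewrite !mxE mulrBl.
  rewrite sumrB sum_delta.
  have -> : \sum_j (f i == lift ord0 j)%:R * v (lift ord0 j) = v (f i).
    case: (unliftP ord0 (f i)) => [j' ->|->].
      under eq_bigr => j _ do rewrite (inj_eq (@lift_inj _ ord0)).
      by rewrite sum_delta.
    rewrite v0 big1 // => j _.
    by rewrite (negbTE (neq_lift _ _)) mul0r.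
  by rewrite /v -parL -fconnect_par ?subrr // eq_sym neq_lift.
have := mul_adj_mx (Emx f); move/(congr1 (fun M => M *m c)).
rewrite -mulmxA Ec mulmx0 mul_scalar_mx => /matrixP /(_ j0 0).
rewrite !mxE /v -xj0 nx mulr1 => ->. done.
Qed.

Lemma detE f : \det (Emx f) = if acyc f then (-1) ^+ n else 0.
Proof. by case: ifP => H; [apply: detE_acyc | apply: detE_cyc; rewrite H]. Qed.

End Det.
End Arbo.

Definition red (S : nzRingType) n (A : 'M[S]_n.+1) : 'M[S]_n :=
  \matrix_(i, j) A (lift ord0 i) (lift ord0 j).

Lemma red_lap (S : comNzRingType) n (w : 'I_n.+1 -> 'I_n.+1 -> S) :
  red (laplacian w) = \matrix_(i, j) \sum_k w (lift ord0 i) k *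
     ((k == lift ord0 j)%:R - (i == j)%:R).
Proof.
apply/matrixP => i j; rewrite !mxE (inj_eq (@lift_inj _ ord0)).
under [RHS]eq_bigr => k _ do rewrite mulrBr.
rewrite sumrB.
under [X in X - _]eq_bigr => k _ do rewrite mulrC eq_sym.
rewrite sum_delta; case: eqP => [->|_].
  under [X in _ - X]eq_bigr => k _ do rewrite mulr1.
  by rewrite [in RHS](bigD1 (lift ord0 j)) //= opprD addrA subrr sub0r.
by rewrite big1 ?subr0 // => k _; rewrite mulr0.
Qed.

Lemma det_red_lap (S : comNzRingType) n (w : 'I_n.+1 -> 'I_n.+1 -> S) :
  \det (red (laplacian w)) = (-1) ^+ n *
    \sum_(f : {ffun 'I_n -> 'I_n.+1} | acyc f) \prod_i w (lift ord0 i) (f i).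
Proof.
rewrite red_lap /determinant.
under eq_bigr => s _.
  rewrite (eq_bigr (fun i => \sum_k w (lift ord0 i) k *
     ((k == lift ord0 (s i))%:R - (i == s i)%:R))); last by move=> i _; rewrite mxE.
  rewrite bigA_distr_bigA mulr_sumr.
  over.
rewrite exchange_big /= [in RHS]big_mkcond [in RHS]mulr_sumr; apply: eq_bigr => f _.
have -> : \sum_(s : 'S_n) (-1) ^+ s * \prod_i (w (lift ord0 i) (f i) *
     ((f i == lift ord0 (s i))%:R - (i == s i)%:R))
   = (\prod_i w (lift ord0 i) (f i)) * \det (Emx S f).
  rewrite /determinant mulr_sumr; apply: eq_bigr => s _.
  rewrite big_split /= mulrCA; congr (_ * (_ * _)).
  by apply: eq_bigr => i _; rewrite mxE.
rewrite detE; case: ifP => _; last by rewrite mulr0 mulr0.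
by rewrite mulrC.
Qed.

Section Trees.
Variable n : nat.
Implicit Types f g : {ffun 'I_n -> 'I_n.+1}.

Definition edge (x y : 'I_n.+1) : 'I_n.+1 * 'I_n.+1 :=
  if (x < y)%N then (x, y) else (y, x).

Definition Tf f : {set 'I_n.+1 * 'I_n.+1} :=
  [set edge (lift ord0 i) (f i) | i : 'I_n].

Lemma edge_eq a b c d : edge a b = edge c d ->
  (a = c /\ b = d) \/ (a = d /\ b = c).
Proof. by rewrite /edge; do 2 case: ifP => _; case=> -> ->; auto. Qed.

Lemma edge_inj f : acyc f -> injective (fun i => edge (lift ord0 i) (f i)).
Proof.
move=> ac i j /edge_eq [[/lift_inj //]|[E1 E2]].
by have := acyc_2cyc j ac; rewrite -E1 parL E2 eqxx.
Qed.

Lemma Tf_inj f g : acyc f -> acyc g -> Tf f = Tf g -> f = g.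
Proof.
move=> af ag eT; apply/ffunP => i0; apply/eqP/negPn/negP => ne0.
have Q0 : lift ord0 i0 != ord0 /\ par f (lift ord0 i0) != par g (lift ord0 i0).
  by rewrite !parL eq_sym neq_lift.
apply: (acyc_never (Q := fun z => z != ord0 /\ par f z != par g z) af _ Q0).
move=> z [z0 nz]; split => //.
case: (unliftP ord0 z) => [i zi|z0']; last by rewrite z0' eqxx in z0.
have : edge (lift ord0 i) (f i) \in Tf g by rewrite -eT; apply: imset_f.
case/imsetP => j _ /edge_eq [[/lift_inj ij fij]|[E1 E2]].
  by move: nz; rewrite zi !parL fij ij eqxx.
rewrite zi parL E2 !parL; split; first by rewrite eq_sym neq_lift.
rewrite -E1; apply/negP => /eqP fj.
by have := acyc_2cyc i af; rewrite E2 parL fj eqxx.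
Qed.

Variable E : rel 'I_n.+1.
Hypothesis Esym : symmetric E.

Definition goodf f := acyc f && [forall i, E (lift ord0 i) (f i)].

Definition trel (T : {set 'I_n.+1 * 'I_n.+1}) : rel 'I_n.+1 :=
  fun x y => ((x, y) \in T) || ((y, x) \in T).

Lemma trel_sym T : symmetric (trel T).
Proof. by move=> x y; rewrite /trel orbC. Qed.

Lemma Tf_spanning f : goodf f -> spanning_tree E (Tf f).
Proof.
case/andP => ac /forallP gE; apply/andP; split; first (apply/andP; split).
- apply/forallP => e; apply/implyP => /imsetP [i _ ->].
  have ne := acyc_neq i ac; rewrite /edge.
  case: ifP => lt /=; first by rewrite lt gE.
  rewrite Esym gE andbT ltn_neqAle leqNgt lt andbT.
  by apply: contra ne => /eqP E'; apply/eqP/val_inj.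
- have step : forall z, connect (trel (Tf f)) z (par f z).
    move=> z; case: (unliftP ord0 z) => [i ->|->]; last by rewrite par0 connect0.
    apply: connect1; rewrite parL /trel.
    have : edge (lift ord0 i) (f i) \in Tf f by apply: imset_f.
    by rewrite /edge; case: ifP => _ ->; rewrite ?orbT.
  have toroot : forall x, connect (trel (Tf f)) x ord0.
    move=> x; move/forallP: ac => /(_ x) /iter_findex <-.
    elim: (findex _ _ _) => [|m IH] /=; first exact: connect0.
    exact: connect_trans IH (step _).
  apply/forallP => x; apply/forallP => y.
  apply: connect_trans (toroot x) _.
  by rewrite (sym_connect_sym (@trel_sym _)) toroot.
- by rewrite card_imset ?card_ord //; apply: edge_inj.
Qed.


Lemma spanning_Tf T : spanning_tree E T -> exists2 f, goodf f & Tf f = T.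
Proof.
case/andP => /andP [/forallP Tok /forallP Tcon] /eqP Tcard.
have Tin : forall x y, (x, y) \in T -> (x < y)%N && E x y.
  by move=> x y xyT; move/implyP: (Tok (x, y)) => /(_ xyT).
have exP : forall x, exists m, [exists p : m.-tuple 'I_n.+1,
     path (trel T) x p && (last x p == ord0)].
  move=> x; have /connectP [p pp lp] := forallP (Tcon x) ord0.
  exists (size p); apply/existsP; exists (in_tuple p).
  by rewrite /= pp -lp eqxx.
pose d x := ex_minn (exP x).
have dec : forall x, x != ord0 -> exists y, trel T x y && (d y < d x)%N.
  move=> x x0; rewrite /d; case: ex_minnP => m /existsP [p /andP [pp lp]] mmin.
  case: p pp lp => [[|y p'] /= szp] pp lp; first by rewrite lp in x0.
  case/andP: pp => xy pp; exists y; rewrite xy /=.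
  case: ex_minnP => m' _ /(_ (size p')) H.
  have : (m' <= size p')%N.
    apply: H; apply/existsP; exists (in_tuple p'); by rewrite /= pp lp.
  by move/leq_ltn_trans; apply; rewrite -(eqP szp).
pose f := [ffun i => odflt ord0 [pick y | trel T (lift ord0 i) y &&
                                        (d y < d (lift ord0 i))%N]].
have fP : forall i, trel T (lift ord0 i) (f i) && (d (f i) < d (lift ord0 i))%N.
  move=> i; rewrite /f ffunE; case: pickP => [y -> //|H].
  have nz : lift ord0 i != ord0 by rewrite eq_sym neq_lift.
  have [y /andP [Hy1 Hy2]] := dec (lift ord0 i) nz.
  by move: (H y); rewrite Hy1 Hy2.
have ac : acyc f.
  have H : forall k x, (d x < k)%N -> fconnect (par f) x ord0.
    elim=> [//|k IH] x; case: (unliftP ord0 x) => [i ->|->]; last by rewrite connect0.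
    move=> dk; rewrite fconnect_par ?parL; last by rewrite eq_sym neq_lift.
    apply: IH; case/andP: (fP i) => _ /leq_trans; apply; by rewrite -ltnS.
  by apply/forallP => x; apply: (H (d x).+1).
have fE : forall i, E (lift ord0 i) (f i).
  move=> i; case/andP: (fP i) => /orP [/Tin /andP [_ //]|/Tin /andP [_ H]] _.
  by rewrite Esym.
exists f; first by rewrite /goodf ac; apply/forallP.
apply/eqP; rewrite eqEcard Tcard card_imset ?card_ord ?leqnn ?andbT;
  last exact: edge_inj.
apply/subsetP => e /imsetP [i _ ->]; rewrite /edge.
case/andP: (fP i) => /orP [H|H] _.
  by case/andP: (Tin _ _ H) => ->.
case/andP: (Tin _ _ H) => lt _.
by rewrite ltnNge (ltnW lt).
Qed.

Lemma tree_sumE (S : comNzRingType) (w : 'I_n.+1 -> 'I_n.+1 -> S) :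
  (forall x y, w x y = w y x) -> (forall x y, ~~ E x y -> w x y = 0) ->
  tree_sum E w = \sum_(f : {ffun 'I_n -> 'I_n.+1} | acyc f)
                   \prod_i w (lift ord0 i) (f i).
Proof.
move=> wsym w0.
have -> : \sum_(f : {ffun 'I_n -> 'I_n.+1} | acyc f) \prod_i w (lift ord0 i) (f i)
   = \sum_(f in [set f | goodf f]) \prod_i w (lift ord0 i) (f i).
  rewrite [RHS]big_mkcond [LHS]big_mkcond; apply: eq_bigr => f _.
  rewrite inE /goodf; case: (acyc f) => //=.
  case: forallP => // /forallP /forallPn [i ni].
  by rewrite (bigD1 i) //= w0 // mul0r.
rewrite /tree_sum.
have -> : \sum_(T | spanning_tree E T) \prod_(e in T) w e.1 e.2 =
          \sum_(T in Tf @: [set f | goodf f]) \prod_(e in T) w e.1 e.2.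
  apply: eq_bigl => T; apply/idP/idP.
    by case/spanning_Tf => f gf <-; apply: imset_f; rewrite inE.
  by case/imsetP => f; rewrite inE => gf ->; apply: Tf_spanning.
rewrite big_imset /=; last first.
  move=> f g; rewrite !inE => /andP [af _] /andP [ag _]; exact: Tf_inj.
apply: eq_bigr => f; rewrite inE => /andP [af _].
rewrite big_imset /=; last by move=> i j _ _; apply: edge_inj.
apply: eq_bigr => i _; rewrite /edge; case: ifP => //= _; exact: wsym.
Qed.

End Trees.


Lemma ebase_ker (F : fieldType) n (C : 'M[F]_n) :
  (forall i : 'I_n, (i < \rank (kermx C))%N -> row i (row_ebase (kermx C)) *m C = 0) /\
  (forall v : 'rV_n, v *m C = 0 -> exists y : 'rV_n,
      v = y *m row_ebase (kermx C) /\
      forall i : 'I_n, (\rank (kermx C) <= i)%N -> y 0 i = 0).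
Proof.
set K := kermx C; set S := row_ebase K; set k := \rank K.
have rbK : (row_base K <= K)%MS by rewrite eq_row_base submx_refl.
split.
  move=> i ik; apply/sub_kermxP.
  have -> : row i S = row (Ordinal ik) (row_base K).
    apply/rowP => j; rewrite !mxE (bigD1 i) //= big1 ?addr0.
      by rewrite !mxE eqxx ik mul1r.
    move=> l li; rewrite !mxE; case: eqP => [E|_]; last by rewrite mul0r.
    by move: li; rewrite (_ : l = i) ?eqxx //; apply: val_inj; rewrite /= -E.
  by apply: submx_trans (row_sub _ _) _.
move=> v vC; have : (v <= row_base K)%MS by rewrite eq_row_base; apply/sub_kermxP.
case/submxP => w ->; exists (w *m pid_mx k); split; first by rewrite mulmxA.
move=> i ki; rewrite !mxE big1 // => l _; rewrite !mxE.
have -> : (nat_of_ord l == nat_of_ord i) = false.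
  by apply/negbTE; rewrite neq_ltn (leq_trans (ltn_ord l) ki).
by rewrite mulr0.
Qed.

Lemma prod_if_lt (R : comNzRingType) n k (a : R) : (k <= n)%N ->
  \prod_(i < n) (if (i < k)%N then a else 1) = a ^+ k.
Proof.
move=> kn; rewrite -big_mkcond /= (big_ord_narrow kn) prodr_const card_ord //.
Qed.

Lemma key (F : fieldType) n (C B : 'M[F]_n) (t : F) :
  C^T = C ->
  (forall v : 'rV_n, v *m C = 0 -> v *m B *m v^T = 0 -> v = 0) ->
  mup t (\det (map_mx polyC C + ('X - t%:P) *: map_mx polyC B)) = \rank (kermx C).
Proof.
move=> Csym Hker.
have [S1 S2] := ebase_ker C.
set K := kermx C in S1 S2 *; set S := row_ebase K in S1 S2 *.
set k := \rank K in S1 S2 *.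
have Su : S \in unitmx := row_ebase_unit K.
have kn : (k <= n)%N := rank_leq_row K.
pose Ct := S *m C *m S^T. pose Bt := S *m B *m S^T.
have CtT : Ct^T = Ct by rewrite /Ct !trmx_mul trmxK Csym mulmxA.
have Ct0 : forall i j : 'I_n, (i < k)%N -> Ct i j = 0.
  move=> i j ik; have : (row i Ct) 0 j = 0 by rewrite /Ct !row_mul S1 // !mul0mx mxE.
  by rewrite mxE.
have Ct0' : forall i j : 'I_n, (j < k)%N -> Ct i j = 0.
  by move=> i j jk; rewrite -CtT mxE Ct0.
have CtE : Ct = S *m C *m S^T := erefl. have BtE : Bt = S *m B *m S^T := erefl.
clearbody Ct Bt.
pose P := map_mx polyC C + ('X - t%:P) *: map_mx polyC B.
pose SP := map_mx (@polyC F) S.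
have HQ : SP *m P *m SP^T = map_mx polyC Ct + ('X - t%:P) *: map_mx polyC Bt.
  by rewrite /P mulmxDr mulmxDl -scalemxAr -scalemxAl CtE BtE !map_mxM map_trmx.
pose Q' : 'M[{poly F}]_n := \matrix_(i, j) if (i < k)%N then (Bt i j)%:P
                         else (Ct i j)%:P + ('X - t%:P) * (Bt i j)%:P.
pose d : 'rV[{poly F}]_n := \row_i (if (i < k)%N then 'X - t%:P else 1).
have HD : map_mx polyC Ct + ('X - t%:P) *: map_mx polyC Bt = diag_mx d *m Q'.
  apply/matrixP => i j; rewrite mul_diag_mx !mxE; case: ifP => ik.
    by rewrite Ct0 // add0r.
  by rewrite mul1r.
have detD : \det (diag_mx d) = ('X - t%:P) ^+ k.
  rewrite det_diag -(prod_if_lt _ kn); apply: eq_bigr => i _; by rewrite mxE.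
have c0 : \det S != 0 by rewrite -unitfE -unitmxE.
have detQ : (\det S)%:P ^+ 2 * \det P = ('X - t%:P) ^+ k * \det Q'.
  rewrite -detD -det_mulmx -HD -HQ !det_mulmx det_tr /SP det_map_mx.
  by rewrite /= [RHS]mulrC mulrA -expr2.
pose Qt := map_mx (horner_eval t) Q'.
have QtE : forall i j, Qt i j = if (i < k)%N then Bt i j else Ct i j.
  move=> i j; rewrite !mxE horner_evalE; case: ifP => _; rewrite ?hornerC //.
  by rewrite hornerD hornerM hornerC hornerXsubC subrr mul0r addr0.
have Qt0 : \det Qt != 0.
  apply/det0P => [[y y0 yQ]].
  pose y1 : 'rV_n := \row_i (if (i < k)%N then y 0 i else 0).
  pose y2 : 'rV_n := \row_i (if (i < k)%N then 0 else y 0 i).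
  have yE : y = y1 + y2.
    by apply/rowP => i; rewrite !mxE; case: ifP; rewrite ?addr0 ?add0r.
  have yQE : y *m Qt = y1 *m Bt + y2 *m Ct.
    apply/rowP => j; rewrite !mxE -big_split; apply: eq_bigr => i _ /=.
    by rewrite QtE !mxE; case: ifP; rewrite ?mul0r ?addr0 ?add0r.
  have y1B : forall j : 'I_n, (j < k)%N -> (y1 *m Bt) 0 j = 0.
    move=> j jk.
    have e2 : (y2 *m Ct) 0 j = 0 by rewrite mxE big1 // => i _; rewrite Ct0' // mulr0.
    have : (y1 *m Bt + y2 *m Ct) 0 j = 0 by rewrite -yQE yQ mxE.
    by rewrite [in X in X = _]mxE e2 addr0.
  have y1z : y1 = 0.
    have v1C : y1 *m S *m C = 0.
      apply/rowP => j; rewrite -mulmxA !mxE big1 // => i _; rewrite !mxE.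
      case: ifP => ik; last by rewrite mul0r.
      have : (row i (S *m C)) 0 j = 0 by rewrite row_mul S1 // mxE.
      by rewrite !mxE => ->; rewrite mulr0.
    have v1B : y1 *m S *m B *m (y1 *m S)^T = 0.
      rewrite trmx_mul !mulmxA -(mulmxA y1 S B) -(mulmxA y1 (S *m B)) -BtE.
      apply/rowP => j; rewrite ord1 mxE [RHS]mxE big1 // => i _. rewrite [y1^T i 0]mxE [y1 0 i]mxE.
      by case: ifP => ik; [rewrite y1B // mul0r | rewrite mulr0].
    have := Hker _ v1C v1B => /(congr1 (fun M => M *m invmx S)).
    by rewrite mulmxK // mul0mx.
  have y2C : y2 *m S *m C = 0.
    have : y1 *m Bt + y2 *m Ct = 0 by rewrite -yQE yQ.
    rewrite y1z mul0mx add0r.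
    move/(congr1 (fun M => M *m invmx S^T)).
    by rewrite CtE !mulmxA mulmxK ?unitmx_tr // mul0mx.
  have [z [zE zk]] := S2 _ y2C.
  have y2z : y2 = z.
    by have := congr1 (fun M => M *m invmx S) zE; rewrite !mulmxK.
  have y2z0 : y2 = 0.
    apply/rowP => i; rewrite [RHS]mxE; case: (ltnP i k) => ik.
      by rewrite !mxE ik.
    by rewrite y2z zk.
  by move: y0; rewrite yE y1z y2z0 addr0 eqxx.
have detPE : \det P = ('X - t%:P) ^+ k * (\det Q' * ((\det S) ^- 2)%:P).
  apply: (@mulfI _ ((\det S)%:P ^+ 2)); first by rewrite expf_neq0 // polyC_eq0.
  rewrite detQ [RHS]mulrCA; congr (_ * _); rewrite mulrCA.
  by rewrite -rmorphXn /= -polyCM divff ?polyC1 ?mulr1 // expf_neq0.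
rewrite -/P detPE mupMl ?mup_XsubCX ?eqxx //.
rewrite /root hornerM hornerC mulf_eq0 negb_or invr_eq0 expf_neq0 // andbT.
by rewrite -horner_evalE -det_map_mx.
Qed.


Lemma sum_delta' (S : nzRingType) m (a : 'I_m) (g : 'I_m -> S) :
  \sum_j (j == a)%:R * g j = g a.
Proof. by under eq_bigr => j _ do rewrite eq_sym; rewrite sum_delta. Qed.

Lemma liftN0 m (i : 'I_m) : (lift ord0 i == ord0) = false.
Proof. by rewrite eq_sym (negbTE (neq_lift _ _)). Qed.
Lemma liftN0' m (i : 'I_m) : (ord0 == lift ord0 i) = false.
Proof. by rewrite (negbTE (neq_lift _ _)). Qed.

Lemma ker_perp_red (F : fieldType) n (L : 'M[F]_n.+1) :
  L^T = L -> (forall i, \sum_j L i j = 0) -> (n.+1)%:R != 0 :> F ->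
  \rank (kermx L^T :&: kermx (const_mx 1 : 'M[F]_(n.+1, 1)))%MS
  = \rank (kermx (red L)).
Proof.
move=> Lsym Lrow N0.
pose oc : 'M[F]_(n.+1, 1) := const_mx 1.
pose orr : 'M[F]_(1, n.+1) := const_mx 1.
pose ext : 'M[F]_(n, n.+1) := \matrix_(i, j) (lift ord0 i == j)%:R.
pose G : 'M[F]_(n.+1, n) :=
  \matrix_(i, j) ((i == lift ord0 j)%:R - (i == ord0)%:R).
pose u : 'M[F]_(n.+1, 1) := \matrix_(i, j) (i == ord0)%:R.
pose proj : 'M[F]_(n.+1) := 1%:M - ((n.+1)%:R)^-1 *: (oc *m orr).
have E1 : ext *m G = 1%:M.
  apply/matrixP => i j; rewrite !mxE.
  under eq_bigr => k _ do rewrite !mxE mulrBr.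
  rewrite sumrB !sum_delta (inj_eq (@lift_inj _ ord0)).
  by rewrite liftN0 subr0.
have E2 : orr *m G = 0.
  apply/matrixP => i j; rewrite !mxE.
  under eq_bigr => k _ do rewrite !mxE mul1r -[X in X - _]mulr1 -[X in _ - X]mulr1.
  by rewrite sumrB !sum_delta' subrr.
have E3 : G *m ext = 1%:M - u *m orr.
  apply/matrixP => i k; rewrite !mxE big_ord1 !mxE mulr1.
  under eq_bigr => j _ do rewrite !mxE mulrBl.
  rewrite sumrB; case: (unliftP ord0 i) => [i' ->|->].
    under eq_bigr => j _ do rewrite (inj_eq (@lift_inj _ ord0)).
    rewrite sum_delta liftN0 big1 ?subr0 // => j _; by rewrite mul0r.
  rewrite eqxx big1 ?sub0r; last by move=> j _; rewrite liftN0' mul0r.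
  under eq_bigr => j _ do rewrite mul1r.
  case: (unliftP ord0 k) => [k' ->|->].
    under eq_bigr => j _ do rewrite (inj_eq (@lift_inj _ ord0)) eq_sym.
    rewrite (bigD1 k') //= eqxx big1 ?addr0 ?liftN0' ?sub0r //.
    by move=> j /negbTE; rewrite eq_sym => ->.
  by rewrite big1 ?oppr0 ?subrr // => j _; rewrite liftN0.
have E4 : orr *m oc = (n.+1)%:R%:M.
  apply/matrixP => i j; rewrite !ord1 !mxE.
  under eq_bigr => k _ do rewrite !mxE mulr1.
  by rewrite sumr_const card_ord eqxx mulr1n.
have E5 : orr *m L = 0.
  apply/matrixP => i j; rewrite !mxE.
  under eq_bigr => k _ do rewrite !mxE mul1r -{1}Lsym mxE.
  exact: Lrow.
have E6 : ext *m L = red L *m G^T.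
  apply/matrixP => i j; rewrite !mxE.
  under eq_bigr => k _ do rewrite !mxE.
  rewrite sum_delta.
  under eq_bigr => k _ do rewrite !mxE mulrBr.
  rewrite sumrB; case: (unliftP ord0 j) => [j' ->|->].
    under eq_bigr => k _ do rewrite (inj_eq (@lift_inj _ ord0)) mulrC.
    by rewrite sum_delta big1 ?subr0 // => k _; rewrite liftN0 mulr0.
  rewrite big1 ?sub0r; last by move=> k _; rewrite liftN0' mulr0.
  under eq_bigr => k _ do rewrite eqxx mulr1.
  have := Lrow (lift ord0 i); rewrite big_ord_recl => /eqP.
  rewrite addr_eq0 => /eqP ->. done.
have projL : proj *m L = L.
  by rewrite mulmxBl mul1mx -scalemxAl -mulmxA E5 mulmx0 scaler0 subr0.
have projoc : proj *m oc = 0.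
  rewrite mulmxBl mul1mx -scalemxAl -mulmxA E4 mul_mx_scalar scalerA.
  by rewrite mulVf // scale1r subrr.
have projG : proj *m G = G.
  by rewrite mulmxBl mul1mx -scalemxAl -mulmxA E2 mulmx0 scaler0 subr0.
have orrproj : orr *m proj = 0.
  rewrite mulmxBr mulmx1 -scalemxAr mulmxA E4 mul_scalar_mx scalerA.
  by rewrite mulVf // scale1r subrr.
have Xproj : forall m (X : 'M_(m, n.+1)), X *m oc = 0 -> X *m proj = X.
  move=> m X Xoc.
  by rewrite mulmxBr mulmx1 -scalemxAr mulmxA Xoc mul0mx scaler0 subr0.
clearbody proj.
have FG : ext *m proj *m G = 1%:M by rewrite -mulmxA projG E1.
have GF : forall m (X : 'M_(m, n.+1)), X *m oc = 0 -> X *m G *m (ext *m proj) = X.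
  move=> m X Xoc; rewrite !mulmxA -(mulmxA X G ext) E3 mulmxBr mulmx1 mulmxBl.
  by rewrite Xproj // -!mulmxA orrproj !mulmx0 subr0.
have redsym : (red L)^T = red L.
  by apply/matrixP => i j; rewrite !mxE -{1}Lsym mxE.
have E6' : G *m red L = L *m ext^T.
  by have := congr1 trmx E6; rewrite !trmx_mul trmxK redsym Lsym => <-.
set Q := (kermx L^T :&: kermx oc)%MS; set Kp := kermx (red L).
have QL : Q *m L^T = 0 by apply/sub_kermxP; apply: capmxSl.
have Qoc : Q *m oc = 0 by apply/sub_kermxP; apply: capmxSr.
apply/eqP; rewrite eqn_leq; apply/andP; split.
  have sub2 : (Q *m G <= Kp)%MS.
    by apply/sub_kermxP; rewrite -mulmxA E6' mulmxA -{1}Lsym QL mul0mx.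
  rewrite -{1}(GF _ _ Qoc); apply: leq_trans (mxrankM_maxl _ _) _.
  exact: mxrankS.
have sub1 : (Kp *m (ext *m proj) <= Q)%MS.
  rewrite sub_capmx; apply/andP; split; apply/sub_kermxP.
    by rewrite Lsym -(mulmxA Kp) -(mulmxA ext) projL E6 mulmxA mulmx_ker mul0mx.
  by rewrite -(mulmxA Kp) -(mulmxA ext) projoc !mulmx0.
rewrite -{1}(mulmx1 Kp) -FG mulmxA; apply: leq_trans (mxrankM_maxl _ _) _.
exact: mxrankS.
Qed.


Section Lap.
Variable (S : comNzRingType) (m : nat).
Implicit Types a b : 'I_m -> 'I_m -> S.

Lemma lap_ext a b : (forall i j, a i j = b i j) -> laplacian a = laplacian b.
Proof.
move=> ab; apply/matrixP => i j; rewrite !mxE ab.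
by under eq_bigr => k _ do rewrite ab.
Qed.

Lemma lapD a b : laplacian (fun i j => a i j + b i j) = laplacian a + laplacian b.
Proof.
apply/matrixP => i j; rewrite !mxE; case: ifP => //.
by rewrite big_split opprD.
Qed.

Lemma lapZ c a : laplacian (fun i j => c * a i j) = c *: laplacian a.
Proof.
apply/matrixP => i j; rewrite !mxE; case: ifP => //.
by rewrite -mulr_sumr mulrN.
Qed.

Lemma lap_sym a : (forall i j, a i j = a j i) -> (laplacian a)^T = laplacian a.
Proof.
move=> asym; apply/matrixP => i j; rewrite !mxE eq_sym.
by case: eqP => [->|_] //.
Qed.

Lemma lap_row a i : \sum_j laplacian a i j = 0.
Proof.
rewrite (bigD1 i) //= !mxE eqxx.
under eq_bigr => j ji do rewrite !mxE eq_sym (negbTE ji).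
by rewrite addNr.
Qed.

End Lap.

Lemma lap_map (R S : comNzRingType) m (f : {rmorphism R -> S}) (a : 'I_m -> 'I_m -> R) :
  map_mx f (laplacian a) = laplacian (fun i j => f (a i j)).
Proof.
apply/matrixP => i j; rewrite !mxE; case: ifP => // _.
by rewrite rmorphN rmorph_sum.
Qed.

Lemma redD (S : nzRingType) n (A B : 'M[S]_n.+1) : red (A + B) = red A + red B.
Proof. by apply/matrixP => i j; rewrite !mxE. Qed.
Lemma redZ (S : nzRingType) n c (A : 'M[S]_n.+1) : red (c *: A) = c *: red A.
Proof. by apply/matrixP => i j; rewrite !mxE. Qed.
Lemma red_map (R S : nzRingType) n (f : R -> S) (A : 'M[R]_n.+1) :
  red (map_mx f A) = map_mx f (red A).
Proof. by apply/matrixP => i j; rewrite !mxE. Qed.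


Lemma lap_entry (R : comNzRingType) m (w : 'I_m -> 'I_m -> R) i j :
  laplacian w i j = w i j - (i == j)%:R * \sum_k w i k.
Proof.
rewrite mxE; case: eqP => [->|_]; last by rewrite mul0r subr0.
by rewrite mul1r [in RHS](bigD1 j) //= opprD addrA subrr sub0r.
Qed.

Lemma lap_quad (R : comNzRingType) m (w : 'I_m -> 'I_m -> R) (u : 'rV[R]_m) :
  (forall i j, w i j = w j i) ->
  (u *m laplacian w *m u^T) 0 0 *+ 2 =
  - \sum_i \sum_j w i j * (u 0 i - u 0 j) ^+ 2.
Proof.
move=> wsym.
pose X := \sum_i \sum_j w i j * (u 0 i ^+ 2 - u 0 i * u 0 j).
have q : (u *m laplacian w *m u^T) 0 0 = - X.
  rewrite mxE.
  under eq_bigr => j _ do rewrite !mxE mulr_suml.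
  rewrite exchange_big /X -sumrN; apply: eq_bigr => i _.
  have E : forall j, u 0 i * laplacian w i j * u 0 j =
      u 0 i * w i j * u 0 j - (i == j)%:R * ((\sum_k w i k) * u 0 i * u 0 j).
    by move=> j; rewrite lap_entry; ring.
  under eq_bigr => j _ do rewrite E.
  rewrite sumrB sum_delta mulr_suml mulr_suml -sumrB -sumrN; apply: eq_bigr => j _; ring.
rewrite q.
have XE : X = \sum_i \sum_j w i j * (u 0 j ^+ 2 - u 0 i * u 0 j).
  rewrite /X exchange_big /=; apply: eq_bigr => i _; apply: eq_bigr => j _.
  by rewrite (wsym j i); ring.
have -> : \sum_i \sum_j w i j * (u 0 i - u 0 j) ^+ 2 = X + X.
  rewrite {2}XE /X -big_split /=; apply: eq_bigr => i _.
  rewrite -big_split /=; apply: eq_bigr => j _; ring.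
by rewrite mulr2n opprD.
Qed.

Lemma quad0 (R : realFieldType) m (w : 'I_m -> 'I_m -> R) (u : 'rV[R]_m) :
  (forall i j, w i j = w j i) -> (forall i j, 0 <= w i j) ->
  u *m laplacian w *m u^T = 0 -> forall i j, w i j * (u 0 i - u 0 j) ^+ 2 = 0.
Proof.
move=> wsym wge0 q0 i j.
have := lap_quad u wsym; rewrite q0 mxE mul0rn => /eqP; rewrite eq_sym oppr_eq0 => /eqP H.
have ge0 : forall i j, 0 <= w i j * (u 0 i - u 0 j) ^+ 2.
  by move=> i' j'; rewrite mulr_ge0 // sqr_ge0.
have Hi : \sum_j w i j * (u 0 i - u 0 j) ^+ 2 = 0.
  move: H; move/psumr_eq0P; apply => // i' _; apply: sumr_ge0 => j' _; exact: ge0.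
by move: Hi; move/psumr_eq0P; apply => // j' _; exact: ge0.
Qed.

Lemma red_sym (S : nzRingType) n (A : 'M[S]_n.+1) : A^T = A -> (red A)^T = red A.
Proof. by move=> As; apply/matrixP => i j; rewrite !mxE -{1}As mxE. Qed.

Theorem mainTheorem6 (R : realFieldType) (N : nat) (gamma : 'M[R]_N) (tstar : R) :
  (0 < N)%N -> signed_graph gamma -> sg_connected gamma ->
  ker_dim_on_ones_perp (laplacian (gamma_t gamma tstar))
  = mup tstar (M_Gamma_poly gamma).
Proof.
case: N gamma tstar => [//|n] gamma t _ [gsym gdiag] gconn.
pose wp (i j : 'I_n.+1) := if 0 < gamma i j then gamma i j else 0.
pose wn (i j : 'I_n.+1) := if 0 < gamma i j then 0 else gamma i j.
set L := laplacian (gamma_t gamma t).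
pose Lp := laplacian wp; pose Ln := laplacian wn.
have gtsym : forall i j, gamma_t gamma t i j = gamma_t gamma t j i.
  by move=> i j; rewrite /gamma_t gsym.
have wpsym : forall i j, wp i j = wp j i by move=> i j; rewrite /wp gsym.
have wnsym : forall i j, wn i j = wn j i by move=> i j; rewrite /wn gsym.
have LE : L = Lp + t *: Ln.
  rewrite /L /Lp /Ln -lapZ -lapD; apply: lap_ext => i j.
  by rewrite /gamma_t /wp /wn; case: ifP => _; rewrite ?mulr0 ?addr0 ?add0r.
pose W (i j : 'I_n.+1) := if 0 < gamma i j then (gamma i j)%:P else gamma i j *: 'X.
have WE : laplacian W = map_mx polyC L + ('X - t%:P) *: map_mx polyC Ln.
  rewrite /L /Ln !lap_map -lapZ -lapD; apply: lap_ext => i j.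
  rewrite /W /gamma_t /wn /=; case: ifP => _; first by rewrite polyC0 mulr0 addr0.
  by rewrite -mul_polyC polyCM; ring.
have Esym : symmetric (sg_adj gamma) by move=> i j; rewrite /sg_adj gsym.
have Wsym : forall i j, W i j = W j i by move=> i j; rewrite /W gsym.
have W0 : forall i j, ~~ sg_adj gamma i j -> W i j = 0.
  by move=> i j; rewrite /sg_adj negbK /W => /eqP ->; rewrite ltxx scale0r.
have ME : M_Gamma_poly gamma = (-1) ^+ n * \det (red (laplacian W)).
  by rewrite /M_Gamma_poly -/W (tree_sumE Esym Wsym W0) det_red_lap mulrA
    -expr2 sqrr_sign mul1r.
rewrite ME mupMr; last first.
  by rewrite /root horner_exp hornerN hornerC signr_eq0.
rewrite WE redD redZ !red_map.
have Lsym : L^T = L by apply: lap_sym.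
rewrite key; last first.
- move=> v vC vB.
  pose e : 'M[R]_(n, n.+1) := \matrix_(i, j) (lift ord0 i == j)%:R.
  have redE : forall A : 'M[R]_n.+1, red A = e *m A *m e^T.
    move=> A.
    have eA : e *m A = \matrix_(i, k) A (lift ord0 i) k.
      apply/matrixP => i k; rewrite !mxE.
      under eq_bigr => l _ do rewrite !mxE.
      by rewrite sum_delta.
    rewrite eA; apply/matrixP => i j; rewrite !mxE.
    under eq_bigr => k _ do rewrite !mxE mulrC.
    by rewrite sum_delta.
  pose uu := v *m e.
  have quadE : forall A, uu *m A *m uu^T = v *m red A *m v^T.
    by move=> A; rewrite redE /uu trmx_mul !mulmxA.
  have uL : uu *m L *m uu^T = 0 by rewrite quadE vC mul0mx.
  have uLn : uu *m Ln *m uu^T = 0 by rewrite quadE.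
  have uLp : uu *m Lp *m uu^T = 0.
    move: uL; rewrite LE mulmxDr mulmxDl -scalemxAr -scalemxAl uLn scaler0.
    by rewrite addr0.
  have wpge0 : forall i j, 0 <= wp i j.
    by move=> i j; rewrite /wp; case: ifP => // /ltW.
  have hp' := quad0 wpsym wpge0 uLp.
  have hn : forall i j, - wn i j * (uu 0 i - uu 0 j) ^+ 2 = 0.
    apply: (quad0 (w := fun i j => - wn i j)).
    - by move=> i j; rewrite wnsym.
    - move=> i j; rewrite /wn; case: ifP => [_|]; first by rewrite oppr0.
      by rewrite oppr_ge0 => /negbT; rewrite -leNgt.
    have -> : laplacian (fun i j => - wn i j) = (-1) *: Ln.
      by rewrite /Ln -lapZ; apply: lap_ext => i j; rewrite mulN1r.
    by rewrite -scalemxAr -scalemxAl uLn scaler0.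
  have adj : forall i j, sg_adj gamma i j -> uu 0 i = uu 0 j.
    move=> i j gij.
    have : (wp i j + wn i j) * (uu 0 i - uu 0 j) ^+ 2 = 0.
      by rewrite mulrDl hp' -[wn i j]opprK mulNr hn oppr0 addr0.
    have -> : wp i j + wn i j = gamma i j.
      by rewrite /wp /wn; case: ifP; rewrite ?addr0 ?add0r.
    move/eqP; rewrite mulf_eq0 (negbTE gij) /= sqrf_eq0 subr_eq0.
    by move/eqP.
  have u0 : uu 0 ord0 = 0.
    by rewrite !mxE big1 // => i _; rewrite !mxE liftN0 mulr0.
  have uall : forall j, uu 0 j = 0.
    move=> j; have /connectP [p pp ->] := gconn ord0 j.
    elim: p ord0 pp u0 => [|y p IH] x //= /andP [xy pp] ux.
    by apply: IH pp _; rewrite -(adj _ _ xy).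
  apply/rowP => j; rewrite mxE; have := uall (lift ord0 j); rewrite /uu mxE.
  under eq_bigr => i _ do rewrite !mxE (inj_eq (@lift_inj _ ord0)) mulrC.
  by rewrite sum_delta'.
- exact: red_sym.
rewrite /ker_dim_on_ones_perp ker_perp_red //; first exact: lap_row.
by rewrite pnatr_eq0.
Qed.
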